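(* Let $f:\mathbb{R}^n\times\mathbb{R}\to\mathbb{R}^n$ be $C^1$, let $\lambda_-<\lambda_+$, let $\Lambda$ be a parameter shift from $\lambda_-$ to $\lambda_+$, and let $r>0$. Let $\Phi$ be the solution cocycle of $\dot x=f(x,\Lambda(rt))$ and $\phi_-$ the flow of $\dot x=f(x,\lambda_-)$. Assume $A_-$ is an asymptotically stable attractor for $\phi_-$. For $\eta>0$ and $t\in\mathbb{R}$ define $$A_t^{\eta}:=\bigcap_{\tau>0}\overline{\bigcup_{s\le-\tau}\Phi\big(t,s,\mathcal{N}_\eta(A_-)\big)}.$$ Then there is $\tilde\eta>0$ such that the nonautonomous set $\{A^\eta_t\}_{t\in\mathbb{R}}$ is independent of $\eta$ for $\eta\in(0,\tilde\eta]$, i.e. $A_t^\eta=A_t^{\eta'}$ for all $t\in\mathbb{R}$ and all $\eta,\eta'\in(0,\tilde\eta]$.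
   Context: A parameter shift from $\lambda_-$ to $\lambda_+$ is a smooth $\Lambda:\mathbb{R}\to(\lambda_-,\lambda_+)$ with $\lim_{\tau\to\pm\infty}\Lambda(\tau)=\lambda_\pm$ and $\lim_{\tau\to\pm\infty}\Lambda'(\tau)=0$. Solutions are assumed to exist for all time; $\Phi(t,s,x_0)$ is the value at time $t$ of the solution with $x(s)=x_0$. $d(X,Y)=\sup_{x\in X}\inf_{y\in Y}\|x-y\|$ and $\mathcal{N}_\eta(M)=\{x: d(x,M)<\eta\}$. A compact $\phi_-$-invariant set $M$ is asymptotically stable if (i) for every $\epsilon>0$ there is $\delta>0$ with $d(\phi_-(t,y),M)<\epsilon$ for all $t>0$, $y\in\mathcal{N}_\delta(M)$, and (ii) there is $\eta>0$ with $\lim_{t\to\infty}d(\phi_-(t,y),M)=0$ for all $y\in\mathcal{N}_\eta(M)$. *)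

(* Defs.v *)
From HB Require Import structures.
From mathcomp Require Import all_boot all_order all_algebra.
From mathcomp Require Import all_classical all_reals all_analysis.
Set Implicit Arguments. Unset Strict Implicit. Unset Printing Implicit Defensive.
Import Order.TTheory GRing.Theory Num.Theory.
Import numFieldNormedType.Exports.
Local Open Scope classical_set_scope.
Local Open Scope ring_scope.

Definition enorm {R : realType} {n : nat} (x : 'rV[R]_n) : R :=
  Num.sqrt (\sum_(i < n) x ord0 i ^+ 2).

(* N_eta(M) = {x : d(x,M) < eta}; d(x,M) = inf_{y in M} ||x-y|| < eta
   unfolds to: some y in M has ||x - y|| < eta. *)
Definition nbhd_set {R : realType} {n : nat} (eta : R) (M : set 'rV[R]_n)
  : set 'rV[R]_n := [set x | exists2 y, M y & enorm (x - y) < eta].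

Definition C1 {R : realType} {n : nat} (f : 'rV[R]_n * R -> 'rV[R]_n) : Prop :=
  forall v : 'rV[R]_n * R,
    (forall p, derivable f p v) /\ continuous (fun p => 'D_v f p).

Definition smooth {R : realType} (g : R -> R) : Prop :=
  forall k x, derivable (derive1n k g) x 1.

Definition parameter_shift {R : realType} (lm lp : R) (L : R -> R) : Prop :=
  smooth L /\
  (forall t, lm < L t < lp) /\
  (L x @[x --> -oo] --> lm) /\
  (L x @[x --> +oo] --> lp) /\
  (derive1 L x @[x --> -oo] --> 0) /\
  (derive1 L x @[x --> +oo] --> 0).

(* Phi t s x0 : value at t of the solution of x' = f(x, L(r t)) with x(s) = x0
   (solutions exist for all time). *)
Definition solution_cocycle {R : realType} {n : nat}
  (f : 'rV[R]_n * R -> 'rV[R]_n) (L : R -> R) (r : R)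
  (Phi : R -> R -> 'rV[R]_n -> 'rV[R]_n) : Prop :=
  forall s x0, Phi s s x0 = x0 /\
    forall t : R, is_derive t (1 : R) (fun u => Phi u s x0) (f (Phi t s x0, L (r * t))).

Definition autonomous_flow {R : realType} {n : nat}
  (f : 'rV[R]_n * R -> 'rV[R]_n) (lm : R)
  (phi : R -> 'rV[R]_n -> 'rV[R]_n) : Prop :=
  forall y, phi 0 y = y /\
    forall t : R, is_derive t (1 : R) (fun u => phi u y) (f (phi t y, lm)).

Definition flow_invariant {R : realType} {n : nat}
  (phi : R -> 'rV[R]_n -> 'rV[R]_n) (M : set 'rV[R]_n) : Prop :=
  forall t, phi t @` M = M.

(* Asymptotic stability, with d(z,M) < e unfolded to "exists m in M,
   ||z - m|| < e", and lim d(phi t y, M) = 0 unfolded accordingly. *)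
Definition asymptotically_stable {R : realType} {n : nat}
  (phi : R -> 'rV[R]_n -> 'rV[R]_n) (M : set 'rV[R]_n) : Prop :=
  [/\ compact M, flow_invariant phi M,
      (forall eps : R, 0 < eps -> exists2 delta : R, 0 < delta &
         forall t y, 0 < t -> nbhd_set delta M y -> nbhd_set eps M (phi t y)) &
      (exists2 eta : R, 0 < eta &
         forall y, nbhd_set eta M y ->
           forall eps : R, 0 < eps ->
             \forall t \near +oo, nbhd_set eps M (phi t y))].

Definition pullback_set {R : realType} {n : nat}
  (Phi : R -> R -> 'rV[R]_n -> 'rV[R]_n) (A : set 'rV[R]_n) (eta t : R)
  : set 'rV[R]_n :=
  \bigcap_(tau in [set tau : R | 0 < tau])
    closure (\bigcup_(s in [set s : R | s <= - tau])
               (Phi t s @` nbhd_set eta A)).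

(* Main.v *)
Require Import Defs.
From HB Require Import structures.
From mathcomp Require Import all_boot all_order all_algebra.
From mathcomp Require Import all_classical all_reals all_analysis.
From mathcomp Require Import ring lra.
Import Order.TTheory GRing.Theory Num.Theory.
Import numFieldNormedType.Exports.
Local Open Scope classical_set_scope.
Local Open Scope ring_scope.
Set Implicit Arguments. Unset Strict Implicit. Unset Printing Implicit Defensive.

Section RI.
Variable R : realType.

Lemma real_ind (a b : R) (P : R -> Prop) : a <= b ->
  (forall t, a <= t <= b -> (forall s, a <= s < t -> P s) ->
     P t /\ exists2 d, 0 < d & forall s, t <= s < t + d -> P s) ->
  forall t, a <= t <= b -> P t.
Proof.
move=> ab H.
pose S := [set x | a <= x <= b /\ forall s, a <= s < x -> P s].
have Sa : S a by split; [rewrite lexx ab | move=> s /andP[h1 h2]; move: (le_lt_trans h1 h2); rewrite ltxx].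
have hS : has_sup S by split; [exists a | exists b => x [/andP[_ ->]]].
set c := sup S.
have ac : a <= c by apply: sup_upper_bound.
have cb : c <= b by apply: ge_sup; [exists a | move=> x [/andP[_ ->]]].
have Pbelow : forall s, a <= s < c -> P s.
  move=> s /andP[a_s sc].
  have [e [_ He] ce] := sup_adherent (eps := c - s) ltac:(by rewrite subr_gt0) hS.
  apply: He; rewrite a_s /=; move: ce; rewrite /c; lra.
have [Pc [d d0 Pd]] := H c ltac:(by rewrite ac cb) Pbelow.
have cb' : c = b.
  apply/eqP; rewrite eq_le cb /=; rewrite leNgt; apply/negP => cltb.
  pose x := Order.min (c + d / 2) b.
  have Sx : S x.
    split; first by rewrite /x; apply/andP; split; [rewrite le_min; apply/andP; split; lra| rewrite ge_min lexx orbT].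
    move=> s /andP[a_s sx].
    have [sc|cs] := ltP s c; first by apply: Pbelow; rewrite a_s sc.
    apply: Pd; rewrite cs /=; move: sx; rewrite /x lt_min => /andP[h _]; lra.
  have : x <= c by apply: sup_upper_bound.
  rewrite /x ge_min; apply/negP; rewrite negb_or -!ltNge; apply/andP; split; lra.
move=> t /andP[a_t tb].
have [tc|ct] := ltP t c; first by apply: Pbelow; rewrite a_t tc.
have -> : t = c by apply/eqP; rewrite eq_le ct cb' tb.
exact: Pc.
Qed.
End RI.

Section G.
Variable R : realType.
Lemma der_approx {V : normedModType R} (d : R -> V) (t : R) (dd : V) : is_derive t (1:R) d dd ->
  forall g, 0 < g -> exists2 r, 0 < r & forall h, h != 0 -> `|h| < r ->
     `|d (h + t) - d t - h *: dd| <= g * `|h|.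
Proof.
move=> D g g0.
have cv := @ex_derive _ _ _ _ _ _ _ D.
rewrite /derivable -(@derive_val _ _ _ _ _ _ _ D) in cv *.
move: cv => /cvgr_dist_lt /(_ g g0).
move=> /nbhs_ballP [r /= r0 Hr]; exists r => // h h0 hr.
have := Hr h; rewrite /ball /= sub0r normrN => /(_ hr h0).
rewrite /= [h *: 1]mulr1 addrC.
set X := d (h + t) - d t.
move=> Hlt.
have -> : X - h *: derive d t 1 = - (h *: (derive d t 1 - h^-1 *: X)).
  by rewrite scalerBr scalerA mulfV // scale1r opprB.
rewrite normrN normrZ mulrC ler_wpM2r //; apply: ltW; move: Hlt; rewrite addrC; exact.
Qed.

Lemma der_cont {V : normedModType R} (d : R -> V) (t : R) (dd : V) : is_derive t (1:R) d dd ->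
  forall g, 0 < g -> exists2 r, 0 < r & forall s, `|s - t| < r -> `|d s - d t| < g.
Proof.
move=> D g g0.
have [r r0 Hr] := der_approx D (ltr01 : (0:R) < 1).
have q0 : 0 < g / (`|dd| + 1) by apply: divr_gt0 => //; apply: ltr_wpDl.
exists (Order.min r (g / (`|dd| + 1))); first by rewrite lt_min r0 q0.
move=> s; rewrite lt_min => /andP[sr sq].
have [->|st] := eqVneq s t; first by rewrite subrr normr0.
have h0 : s - t != 0 by rewrite subr_eq0.
have := Hr _ h0 sr; rewrite subrK => H.
have E : d s - d t = (d s - d t - (s - t) *: dd) + (s - t) *: dd by rewrite subrK.
rewrite E; apply: (le_lt_trans (ler_normD _ _)); rewrite normrZ.
have : `|s - t| * (`|dd| + 1) < g by rewrite -ltr_pdivlMr // ltr_wpDl.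
move: H; rewrite mul1r => H; nra.
Qed.

Lemma gronwall {V : normedModType R} (a b : R) (u w du dw : R -> V) (M M' C eps rho : R) :
  a <= b ->
  (forall t, a <= t <= b -> is_derive t (1:R) u (du t)) ->
  (forall t, a <= t <= b -> is_derive t (1:R) w (dw t)) ->
  (forall t, a <= t <= b -> `|u t - w t| <= rho -> `|du t - dw t| <= M * `|u t - w t| + eps) ->
  0 <= M -> M <= M' -> 0 <= eps -> eps < (M' - M) * C -> `|u a - w a| < C ->
  C * expR (M' * (b - a)) <= rho ->
  forall t, a <= t <= b -> `|u t - w t| < C * expR (M' * (t - a)).
Proof.
move=> ab Du Dw Hl M0 MM' eps0 epsC Ha Crho.
have C0 : 0 < C by apply: le_lt_trans Ha.
pose d := u - w.
have Dd : forall t, a <= t <= b -> is_derive t (1:R) d (du t - dw t).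
  by move=> t ht; apply: is_deriveB; [apply: Du | apply: Dw].
pose B s := C * expR (M' * (s - a)).
have Bmono : forall s0 t0, s0 <= t0 -> B s0 <= B t0.
  move=> s t st; rewrite /B; apply: ler_wpM2l; [exact: ltW| rewrite ler_expR; apply: ler_wpM2l; lra].
have BC : forall s, a <= s -> C <= B s.
  move=> s ahs; have := Bmono a s ahs; rewrite /B subrr mulr0 expR0 mulr1 //.
apply: (@real_ind _ a b (fun s => `|d s| < B s) ab).
move=> t ht IH.
have /andP[a_t tb] := ht.
have Dt := Dd t ht.
have ext : `|d t| < B t -> exists2 de, 0 < de & forall s, t <= s < t + de -> `|d s| < B s.
  move=> Pt.
  have g0 : 0 < (B t - `|d t|) / 2 by apply: divr_gt0 => //; rewrite subr_gt0.
  have [r r0 Hr] := der_cont Dt g0.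
  exists r => // s /andP[ts str].
  have := Hr s; rewrite ger0_norm ?subr_ge0 // => /(_ ltac:(lra)) Hs.
  have := Bmono t s ts.
  have := ler_distD (d t) (d s) 0; rewrite !subr0 => Htri.
  lra.
suff Pt : `|d t| < B t by split => //; apply: ext.
have [tea|ta] := eqVneq t a.
  by rewrite tea /B subrr mulr0 expR0 mulr1.
have a_t' : a < t by rewrite lt_neqAle eq_sym ta a_t.
have Hle : `|d t| <= B t.
  rewrite leNgt; apply/negP => Hgt.
  have g0 : 0 < (`|d t| - B t) / 2 by apply: divr_gt0 => //; rewrite subr_gt0.
  have [r r0 Hr] := der_cont Dt g0.
  pose s := t - Order.min r (t - a) / 2.
  have mpos : 0 < Order.min r (t - a) by rewrite lt_min r0 subr_gt0 a_t'.
  have mle1 : Order.min r (t - a) <= r by rewrite ge_min lexx.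
  have mle2 : Order.min r (t - a) <= t - a by rewrite ge_min lexx orbT.
  have Ps : `|d s| < B s by apply: IH; apply/andP; split; rewrite /s; lra.
  have := Hr s; have -> : s - t = - (Order.min r (t - a) / 2) by rewrite /s; ring.
  rewrite normrN gtr0_norm; last by apply: divr_gt0.
  move=> /(_ ltac:(lra)) Hs.
  have := Bmono s t ltac:(rewrite /s; lra).
  have := ler_distD (d s) (d t) 0; rewrite !subr0 => Htri.
  rewrite distrC in Htri; lra.
have Hdd : `|du t - dw t| <= M * B t + eps.
  have := Hl t ht; rewrite -/(d t).
  have : `|d t| <= rho.
    apply: le_trans Hle _; apply: le_trans Crho; exact: Bmono.
  move=> H1 /(_ H1) H2; apply: le_trans H2 _; rewrite lerD2r ler_wpM2l //.
rewrite lt_neqAle Hle andbT; apply/negP => /eqP Heq.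
pose g := (M' - M) * C - eps.
have g0 : 0 < g by rewrite /g subr_gt0.
have g20 : 0 < g / 2 by apply: divr_gt0.
have [r r0 Hr] := der_approx Dt g20.
set Bt := B t.
pose Q := M' * (M * Bt + eps + g / 2).
have Bt0 : C <= Bt := BC t a_t.
have Q0 : 0 <= Q by rewrite /Q; apply: mulr_ge0; [lra| nra].
pose kap := g / (4 * Q + 4).
have kap0 : 0 < kap by apply: divr_gt0 => //; lra.
pose mm := Order.min (Order.min r (t - a)) kap.
have mm1 : mm <= r by rewrite /mm !ge_min lexx.
have mm2 : mm <= t - a by rewrite /mm !ge_min lexx orbT.
have mm3 : mm <= kap by rewrite /mm !ge_min lexx orbT.
have mm0 : 0 < mm by rewrite /mm !lt_min r0 kap0 subr_gt0 a_t'.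
pose k := mm / 2.
have kpos : 0 < k by rewrite /k; lra.
have kle1 : k < r by rewrite /k; lra.
have kle2 : k < t - a by rewrite /k; lra.
have kle3 : k <= kap by rewrite /k; lra.
have Qk : Q * k <= g / 4.
  have : Q * k <= Q * kap by apply: ler_wpM2l.
  suff : Q * kap <= g / 4 by lra.
  rewrite /kap mulrA ler_pdivrMr; last lra.
  nra.
have Ps : `|d (t - k)| < B (t - k) by apply: IH; lra.
have hk0 : - k != 0 by rewrite oppr_eq0 gt_eqF.
have := Hr (- k) hk0; rewrite normrN gtr0_norm // => /(_ kle1).
have -> : - k + t = t - k by rewrite addrC.
move=> Herr.
have Hlow : Bt - k * (M * Bt + eps + g / 2) <= `|d (t - k)|.
  have E : d t = d (t - k) - (d (t - k) - d t - (- k) *: (du t - dw t)) + k *: (du t - dw t).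
    by rewrite scaleNr opprK opprD opprB addrA subrK addrC subrK.
  have : `|d t| <= `|d (t - k)| + g / 2 * k + k * (M * Bt + eps).
    rewrite {1}E; apply: le_trans (ler_normD _ _) _.
    apply: lerD; first by apply: le_trans (ler_normB _ _) _; rewrite lerD2l.
    by rewrite normrZ gtr0_norm //; apply: ler_wpM2l => //; apply: ltW.
  rewrite Heq -/Bt; lra.
have Hup : B (t - k) * (1 + M' * k) <= Bt.
  have -> : B (t - k) = Bt * expR (- (M' * k)).
    by rewrite /Bt /B -mulrA -expRD; congr (_ * expR _); ring.
  rewrite -mulrA; apply: ler_piMr; first by apply: le_trans Bt0; exact: ltW.
  rewrite expRN mulrC ler_pdivrMr ?expR_gt0 // mul1r; exact: expR_ge1Dx.
have M'k0 : 0 <= M' * k by apply: mulr_ge0; lra.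
have : (Bt - k * (M * Bt + eps + g / 2)) * (1 + M' * k) < Bt.
  apply: lt_le_trans Hup.
  rewrite ltr_pM2r; last lra.
  lra.
apply/negP; rewrite -leNgt.
have Hg : g <= (M' - M) * Bt - eps.
  rewrite /g lerD2r; apply: ler_wpM2l; lra.
have E2 : (Bt - k * (M * Bt + eps + g / 2)) * (1 + M' * k) =
   Bt + k * ((M' - M) * Bt - eps - g / 2) - k * (Q * k) by rewrite /Q; ring.
rewrite E2.
have : k * (Q * k) <= k * (g / 4) by apply: ler_wpM2l; lra.
have : k * (g / 4) <= k * ((M' - M) * Bt - eps - g / 2) by apply: ler_wpM2l; lra.
lra.
Qed.
End G.

Section N.
Variable R : realType.
Variable n : nat.
Implicit Types v w : 'rV[R]_n.

Lemma entry_le_norm v i : `|v ord0 i| <= `|v|.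
Proof.
rewrite [leRHS]/Num.norm /= mx_normrE.
exact: (le_bigmax (0:R) (fun ij : 'I_1 * 'I_n => `|v ij.1 ij.2|) (ord0, i)).
Qed.

Lemma norm_le_entries v c : 0 <= c -> (forall i, `|v ord0 i| <= c) -> `|v| <= c.
Proof.
move=> c0 H; rewrite [leLHS]/Num.norm /= mx_normrE.
apply/bigmax_leP; split => // [[i j]] _ /=.
by rewrite (ord1 i); apply: H.
Qed.

Lemma sumsq_ge0 v : 0 <= \sum_(i < n) v ord0 i ^+ 2.
Proof. by apply: sumr_ge0 => i _; apply: sqr_ge0. Qed.

Lemma enorm_lt v c : 0 < c -> (enorm v < c) = (\sum_(i < n) v ord0 i ^+ 2 < c ^+ 2).
Proof.
move=> c0; have E : c = Num.sqrt (c ^+ 2) by rewrite sqrtr_sqr gtr0_norm.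
by rewrite /enorm {1}E ltr_sqrt // exprn_gt0.
Qed.

Lemma entry_le_enorm v i : `|v ord0 i| <= enorm v.
Proof.
rewrite /enorm -(sqrtr_sqr (v ord0 i)) ler_sqrt; last exact: sumsq_ge0.
rewrite (bigD1 i) //= lerDl; apply: sumr_ge0 => j _; exact: sqr_ge0.
Qed.

Lemma norm_le_enorm v : `|v| <= enorm v.
Proof. by apply: norm_le_entries; [apply: sqrtr_ge0 | move=> i; apply: entry_le_enorm]. Qed.

Lemma enorm_le v : enorm v <= n%:R * `|v|.
Proof.
rewrite /enorm -(@ger0_norm _ (n%:R * `|v|)); last by apply: mulr_ge0.
rewrite -sqrtr_sqr ler_sqrt; last by apply: sqr_ge0.
apply: le_trans (_ : \sum_(i < n) `|v| ^+ 2 <= _).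
  apply: ler_sum => i _; rewrite -real_normK ?num_real //.
  rewrite lerXn2r ?nnegrE //; exact: entry_le_norm.
rewrite sumr_const card_ord -mulr_natl exprMn.
have nn : n%:R <= (n%:R : R) ^+ 2.
  case: n => [|m]; first by rewrite expr2 mul0r.
  by rewrite expr2 ler_peMl // ler1n.
rewrite -mulr_natl; have := sqr_ge0 `|v|; nra.
Qed.

Lemma enorm_add2 v w c : enorm v < c -> enorm w < c -> enorm (v + w) < 2 * c.
Proof.
move=> Hv Hw.
have c0 : 0 < c by apply: le_lt_trans Hv; apply: sqrtr_ge0.
move: Hv Hw; rewrite !enorm_lt //; last by rewrite mulr_gt0.
move=> Hv Hw.
apply: le_lt_trans (_ : \sum_(i < n) (2 * v ord0 i ^+ 2 + 2 * w ord0 i ^+ 2) < _).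
  apply: ler_sum => i _; rewrite !mxE; have := sqr_ge0 (v ord0 i - w ord0 i); nra.
rewrite big_split /= -!mulr_sumr; nra.
Qed.

Lemma enormN v : enorm (- v) = enorm v.
Proof. by rewrite /enorm; congr Num.sqrt; apply: eq_bigr => i _; rewrite mxE sqrrN. Qed.

Lemma enormB v w : enorm (v - w) = enorm (w - v).
Proof. by rewrite -enormN opprB. Qed.

End N.

Section MV.
Variable R : realType.

Lemma expR_half_le2 : expR (2^-1 : R) <= 2.
Proof.
have h := expR_ge1Dx (- 2^-1 : R).
rewrite expRN in h.
have e0 := expR_gt0 (2^-1 : R).
have := mulfV (lt0r_neq0 e0).
move: h e0; set e := expR _; set i := e^-1 => h e0 hi.
nra.
Qed.

Lemma mvt_bound {V : normedModType R} (a b : R) (g dg : R -> V) (K : R) : a <= b ->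
  (forall t, a <= t <= b -> is_derive t (1:R) g (dg t)) ->
  (forall t, a <= t <= b -> `|dg t| <= K) ->
  `|g b - g a| <= 4 * K * (b - a).
Proof.
move=> ab Dg Kb.
have K0 : 0 <= K by apply: le_trans (Kb a _); rewrite ?lexx ?ab.
have [->|ba] := eqVneq b a; first by rewrite !subrr normr0 mulr0.
have ab' : a < b by rewrite lt_neqAle eq_sym ba ab.
have ba0 : 0 < b - a by rewrite subr_gt0.
apply/ler_addgt0Pr => beta beta0.
pose C := 2 * K * (b - a) + beta / 2.
pose M' := (2 * (b - a))^-1.
have C0 : 0 < C by rewrite /C; have := mulr_ge0 (mulr_ge0 (ler0n _ 2) K0) (ltW ba0); move: beta0; lra.
have M'0 : 0 < M' by rewrite /M' invr_gt0 mulr_gt0.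
have M'ba : M' * (b - a) = 2^-1 by rewrite /M' invfM -mulrA mulVf ?gt_eqF // mulr1.
have H := @gronwall R V a b g (fun=> g a) dg (fun=> 0) 0 M' C K (C * expR (M' * (b - a))) ab Dg
  (fun t _ => is_derive_cst (g a) t 1)
  (fun t ht _ => ltac:(by rewrite subr0 mul0r add0r; apply: Kb)) (lexx 0) (ltW M'0) K0.
have epsC : K < (M' - 0) * C.
  have E : M' * (2 * K * (b - a)) = K by rewrite /M'; field; rewrite gt_eqF.
  rewrite subr0 /C mulrDr E.
  rewrite ltrDl; apply: mulr_gt0; [by rewrite invr_gt0 mulr_gt0 | lra].
have := H epsC ltac:(by rewrite subrr normr0) (lexx _) b ltac:(by rewrite ab lexx).
rewrite M'ba => Hb; apply: ltW; apply: lt_le_trans Hb _.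
have := expR_half_le2; have := expR_gt0 (2^-1 : R); rewrite /C => ??.
have : (2 * K * (b - a) + beta / 2) * expR 2^-1 <= (2 * K * (b - a) + beta / 2) * 2 by apply: ler_wpM2l; [exact: ltW C0 | done].
lra.
Qed.
End MV.

Section L.
Variable R : realType.

Lemma deriv_line {V W : normedModType R} (f : V -> W) (p E : V) (th : R) :
  derivable f (p + th *: E) E ->
  is_derive th (1:R) (fun s => f (p + s *: E)) ('D_E f (p + th *: E)).
Proof.
move=> D.
have eq : (fun h : R => h^-1 *: (((fun s => f (p + s *: E)) \o shift th) (h *: (1:R)) - f (p + th *: E)))
  = (fun h : R => h^-1 *: ((f \o shift (p + th *: E)) (h *: E) - f (p + th *: E))).
  apply/funext => h /=; congr (_ *: (f _ - _)).
  by rewrite [h *: 1]mulr1 scalerDl addrCA addrA.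
apply: DeriveDef; first by rewrite /derivable eq.
by rewrite /derive eq.
Qed.

Lemma seg_bound {V W : normedModType R} (f : V -> W) (p E : V) (c K : R) :
  (forall th, Order.min 0 c <= th <= Order.max 0 c ->
     derivable f (p + th *: E) E /\ `|'D_E f (p + th *: E)| <= K) ->
  `|f (p + c *: E) - f p| <= 4 * K * `|c|.
Proof.
move=> H.
have [c0|c0] := leP 0 c.
  have := @mvt_bound R W 0 c (fun s => f (p + s *: E)) (fun th => 'D_E f (p + th *: E)) K c0.
  rewrite scale0r addr0 subr0 ger0_norm //; apply.
    by move=> t ht; apply: deriv_line; apply: (H t _).1; rewrite min_l ?max_r.
  by move=> t ht; apply: (H t _).2; rewrite min_l ?max_r.
have c0' : c <= 0 by apply: ltW.
have := @mvt_bound R W c 0 (fun s => f (p + s *: E)) (fun th => 'D_E f (p + th *: E)) K c0'.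
rewrite scale0r addr0 sub0r ltr0_norm // distrC; apply.
  by move=> t ht; apply: deriv_line; apply: (H t _).1; rewrite min_r ?max_l // ltW.
by move=> t ht; apply: (H t _).2; rewrite min_r ?max_l // ltW.
Qed.


Lemma box_compact n (Rb l1 l2 : R) : 0 <= Rb ->
  compact [set p : 'rV[R]_n * R | `|p.1| <= Rb /\ l1 <= p.2 <= l2].
Proof.
move=> Rb0.
have -> : [set p : 'rV[R]_n * R | `|p.1| <= Rb /\ l1 <= p.2 <= l2] =
   [set v : 'rV[R]_n | forall i, `[- Rb, Rb]%classic (v ord0 i)] `*` `[l1, l2]%classic.
  apply/seteqP; split => [[x l] /= [hx hl]|[x l] /= [hx hl]].
    split; last by rewrite /= in_itv /=.
    move=> i /=; rewrite in_itv /= -ler_norml; apply: le_trans hx; exact: entry_le_norm.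
  split; last by move: hl; rewrite /= in_itv.
  apply: norm_le_entries => // i; have := hx i; rewrite /= in_itv /= -ler_norml //.
apply: compact_setX; last exact: segment_compact.
by apply: (@rV_compact _ _ (fun=> `[- Rb, Rb]%classic)) => _; apply: segment_compact.
Qed.

Lemma cont_bound n (g : 'rV[R]_n * R -> 'rV[R]_n) (Rb l1 l2 : R) :
  continuous g -> 0 <= Rb ->
  exists K, 0 <= K /\ forall p, `|p.1| <= Rb -> l1 <= p.2 <= l2 -> `|g p| <= K.
Proof.
move=> gc Rb0.
have cp := @box_compact n Rb l1 l2 Rb0.
have ci : compact (g @` [set p : 'rV[R]_n * R | `|p.1| <= Rb /\ l1 <= p.2 <= l2]).
  by apply: continuous_compact => //; exact: continuous_subspaceT.
have [M [Mreal HM]] := compact_bounded ci.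
exists (`|M| + 1); split; first by apply: addr_ge0.
move=> p h1 h2; have := HM (`|M| + 1) _ (g p) (ex_intro2 _ _ p (conj h1 h2) erefl).
apply; rewrite (le_lt_trans (real_ler_norm Mreal)) // ltrDl //.
Qed.


Lemma f_lip n (f : 'rV[R]_n * R -> 'rV[R]_n) : C1 f -> forall Rb l1 l2 : R, 0 <= Rb ->
  exists M, 0 <= M /\ forall x y l l', `|x| <= Rb -> `|y| <= Rb ->
    l1 <= l <= l2 -> l1 <= l' <= l2 ->
    `|f (x, l) - f (y, l')| <= M * (`|x - y| + `|l - l'|).
Proof.
move=> Cf Rb l1 l2 Rb0.
pose E (k : 'I_n) : 'rV[R]_n * R := (delta_mx ord0 k, 0).
have HK : forall k : 'I_n, exists K : R, 0 <= K /\ forall p, `|p.1| <= Rb -> l1 <= p.2 <= l2 ->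
    `|'D_(E k) f p| <= K.
  by move=> k; apply: cont_bound => //; exact: (Cf (E k)).2.
have [Kf HKf] := choice HK.
pose K := \sum_(k < n) Kf k.
have Kf0 : forall k, 0 <= Kf k by move=> k; case: (HKf k).
have K0 : 0 <= K by apply: sumr_ge0 => k _.
have KfK : forall k, Kf k <= K.
  by move=> k; rewrite /K (bigD1 k) //= lerDl; apply: sumr_ge0.
have [Kl [Kl0 HKl]] := @cont_bound n ('D_((0 : 'rV[R]_n), (1:R)) f) Rb l1 l2 (Cf _).2 Rb0.
exists (4 * (n%:R * K + Kl)); split.
  by apply: mulr_ge0 => //; apply: addr_ge0 => //; apply: mulr_ge0.
move=> x y l l' hx hy hl hl'.
have hxi : forall i, - Rb <= x ord0 i <= Rb by move=> i; rewrite -ler_norml; apply: le_trans hx; exact: entry_le_norm.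
have hyi : forall i, - Rb <= y ord0 i <= Rb by move=> i; rewrite -ler_norml; apply: le_trans hy; exact: entry_le_norm.
pose z (k : nat) : 'rV[R]_n := \row_j (if (j < k)%N then y ord0 j else x ord0 j).
have z0 : z 0%N = x by apply/rowP => j; rewrite !mxE.
have zn : z n = y by apply/rowP => j; rewrite !mxE ltn_ord.
have A : forall k, (k <= n)%N -> `|f (z k, l) - f (x, l)| <= 4 * K * k%:R * `|x - y|.
  elim => [|k IH] kn; first by rewrite z0 subrr normr0 mulr0 mul0r.
  have kn' : (k < n)%N by [].
  pose kk := Ordinal kn'.
  pose c := y ord0 kk - x ord0 kk.
  have zS : (z k.+1, l) = (z k, l) + c *: E kk.
    change ((z k.+1, l) = (z k + c *: delta_mx ord0 kk, l + c *: (0:R))).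
    rewrite scaler0 addr0; congr (_, _); apply/rowP => j; rewrite !mxE /=.
    have [->|jk] := eqVneq j kk.
      by rewrite /kk /= ltnSn ltnn mulr1 /c addrC subrK.
    rewrite mulr0 addr0 ltnS leq_eqVlt.
    suff -> : (nat_of_ord j == k) = false by [].
    by apply/negbTE; apply: contra jk => /eqP jk; apply/eqP/val_inj.
  have step : `|f (z k.+1, l) - f (z k, l)| <= 4 * K * `|x - y|.
    rewrite zS; apply: le_trans (seg_bound (c := c) (K := K) _) _.
      move=> th hth; split; first exact: (Cf _).1.
      apply: le_trans (KfK kk); apply: (HKf kk).2. 2: by rewrite /= scaler0 addr0.
      change (`|z k + th *: delta_mx ord0 kk| <= Rb).
      apply: norm_le_entries => // j; rewrite !mxE /=; rewrite ler_norml.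
      have [->|jk] := eqVneq j kk.
        rewrite mulr1 /kk /= ltnn.
        have := hxi kk; have := hyi kk; move: hth; rewrite /c /kk.
        case: (leP 0 (y ord0 _ - x ord0 _)) => hc;
         [rewrite ?min_l ?max_r // | rewrite ?min_r ?max_l //; try exact: ltW];
         move=> /andP[? ?] /andP[? ?] /andP[? ?]; apply/andP; split; lra.
      rewrite mulr0 addr0.
      by case: ifP => _; [apply: hyi | apply: hxi].
    apply: ler_wpM2l; first by apply: mulr_ge0.
    rewrite /c -normrN opprB; have := entry_le_norm (x - y) kk; rewrite !mxE; exact.
  have := IH (ltnW kn).
  have E2 : f (z k.+1, l) - f (x, l) = (f (z k.+1, l) - f (z k, l)) + (f (z k, l) - f (x, l)).
    by rewrite addrA subrK.
  rewrite E2 => IH'; apply: le_trans (ler_normD _ _) _.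
  have -> : 4 * K * k.+1%:R * `|x - y| = 4 * K * `|x - y| + 4 * K * k%:R * `|x - y|.
    by rewrite -addn1 natrD; ring.
  exact: lerD.
have B : `|f (y, l) - f (y, l')| <= 4 * Kl * `|l - l'|.
  have -> : (y, l) = (y, l') + (l - l') *: ((0 : 'rV[R]_n), (1:R)).
    change ((y, l) = (y + (l - l') *: 0, l' + (l - l') *: (1:R))).
    by rewrite scaler0 addr0 [(l - l') *: 1]mulr1 addrC subrK.
  apply: seg_bound => th hth; split; first exact: (Cf _).1.
  apply: HKl; first by rewrite /= scaler0 addr0.
  rewrite /= [th *: 1]mulr1; move: hl hl' hth.
  case: (leP 0 (l - l')) => hc;
   [rewrite ?min_l ?max_r // | rewrite ?min_r ?max_l //; try exact: ltW];
   move=> /andP[? ?] /andP[? ?] /andP[? ?]; apply/andP; split; lra.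
have := A n (leqnn n); rewrite zn => An.
have E3 : f (x, l) - f (y, l') = - (f (y, l) - f (x, l)) + (f (y, l) - f (y, l')).
  by rewrite opprB addrA subrK.
rewrite E3; apply: le_trans (ler_normD _ _) _; rewrite normrN.
have h1 : 0 <= `|x - y| by [].
have h2 : 0 <= `|l - l'| by [].
have : 4 * K * n%:R * `|x - y| <= 4 * (n%:R * K + Kl) * `|x - y|.
  apply: ler_wpM2r => //; rewrite -mulrA ler_wpM2l // mulrC lerDl //.
have : 4 * Kl * `|l - l'| <= 4 * (n%:R * K + Kl) * `|l - l'|.
  apply: ler_wpM2r => //; rewrite ler_wpM2l // lerDr; apply: mulr_ge0 => //; apply: ler0n.
lra.
Qed.

End L.

Section U.
Variable R : realType.

Lemma sol_bounded {V : normedModType R} (w : R -> V) (a b : R) :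
  (forall t, a <= t <= b -> derivable w t (1:R)) ->
  exists Rw, 0 <= Rw /\ forall t, a <= t <= b -> `|w t| <= Rw.
Proof.
move=> D.
have wc : {within [set` `[a, b]], continuous w}.
  by apply: derivable_within_continuous => t; rewrite in_itv /=; apply: D.
have ci : compact (w @` [set` `[a, b]]) by apply: continuous_compact => //; exact: segment_compact.
have [M [Mreal HM]] := compact_bounded ci.
exists (`|M| + 1); split; first by apply: addr_ge0.
move=> t ht; apply: (HM (`|M| + 1)); first by rewrite (le_lt_trans (real_ler_norm Mreal)) // ltrDl.
by exists t => //; rewrite /= in_itv /=.
Qed.

Lemma shift_der {V : normedModType R} (g : R -> V) (c t : R) (dg : V) :
  is_derive (t - c) (1:R) g dg -> is_derive t (1:R) (fun s => g (s - c)) dg.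
Proof.
move=> D.
have eq : (fun h : R => h^-1 *: (((fun s => g (s - c)) \o shift t) (h *: (1:R)) - g (t - c)))
  = (fun h : R => h^-1 *: ((g \o shift (t - c)) (h *: (1:R)) - g (t - c))).
  by apply/funext => h /=; rewrite addrA.
have Dd := @ex_derive _ _ _ _ _ _ _ D.
apply: DeriveDef; first by rewrite /derivable eq.
by rewrite /derive eq; apply: (@derive_val _ _ _ _ _ _ _ D).
Qed.

Variable n : nat.
Variable f : 'rV[R]_n * R -> 'rV[R]_n.
Hypothesis Cf : C1 f.

Lemma uniq_sol (lm lp : R) (lam : R -> R) (a b : R) (u w : R -> 'rV[R]_n) :
  a <= b -> (forall t, a <= t <= b -> lm <= lam t <= lp) ->
  (forall t, a <= t <= b -> is_derive t (1:R) u (f (u t, lam t))) ->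
  (forall t, a <= t <= b -> is_derive t (1:R) w (f (w t, lam t))) ->
  u a = w a -> u b = w b.
Proof.
move=> ab hl Du Dw uw.
have [Rw [Rw0 HRw]] := @sol_bounded _ w a b (fun t ht => @ex_derive _ _ _ _ _ _ _ (Dw t ht)).
have [M [M0 HM]] := f_lip Cf lm lp (addr_ge0 Rw0 ler01).
apply/eqP; rewrite -subr_eq0 -normr_eq0 eq_le normr_ge0 andbT.
apply/ler_addgt0Pr => beta beta0; rewrite add0r.
pose beta' := Order.min beta 1.
have b'0 : 0 < beta' by rewrite lt_min beta0 ltr01.
have b'1 : beta' <= 1 by rewrite ge_min lexx orbT.
have b'b : beta' <= beta by rewrite ge_min lexx.
pose C := beta' * expR (- ((M + 1) * (b - a))).
have C0 : 0 < C by apply: mulr_gt0 => //; apply: expR_gt0.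
have CE : C * expR ((M + 1) * (b - a)) = beta'.
  by rewrite /C -mulrA -expRD addNr expR0 mulr1.
have H := @gronwall R _ a b u w (fun t => f (u t, lam t)) (fun t => f (w t, lam t)) M (M + 1) C 0 1
  ab Du Dw.
have := H _ M0 ltac:(lra) (lexx 0) ltac:(by rewrite addrAC subrr add0r mul1r) ltac:(by rewrite uw subrr normr0)
  ltac:(by rewrite CE) b ltac:(by rewrite ab lexx).
  rewrite CE => h; suff : `|u b - w b| < beta' by move=> ?; lra.
  apply: h.
move=> t ht h1; rewrite addr0.
have := HM (u t) (w t) (lam t) (lam t).
rewrite subrr normr0 addr0; apply => //; last by apply: hl.
  have := ler_normD (u t - w t) (w t); rewrite subrK => h2.
  have := HRw t ht; lra.
  by apply: le_trans (HRw t ht) _; rewrite lerDl.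
by apply: hl.
Qed.

End U.

Section Main.
Variables (R : realType) (n : nat)
  (f : 'rV[R]_n * R -> 'rV[R]_n) (lm lp : R) (L : R -> R) (r : R)
  (Phi : R -> R -> 'rV[R]_n -> 'rV[R]_n) (phi : R -> 'rV[R]_n -> 'rV[R]_n)
  (Am : set 'rV[R]_n).
Hypotheses (Cf : C1 f) (lmlp : lm < lp) (PS : parameter_shift lm lp L) (r0 : 0 < r)
  (SC : solution_cocycle f L r Phi) (AF : autonomous_flow f lm phi)
  (AS : asymptotically_stable phi Am).

Lemma Lrange t : lm <= L t <= lp.
Proof. by case: PS => _ [/(_ t) /andP[h1 h2] _]; rewrite !ltW. Qed.

Lemma cocycle s s' t x : s <= s' -> s' <= t -> Phi t s x = Phi t s' (Phi s' s x).
Proof.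
move=> ss' s't.
apply: (@uniq_sol R n f Cf lm lp (fun th => L (r * th)) s' t (fun th => Phi th s x) (fun th => Phi th s' (Phi s' s x))) => //.
- by move=> th _; apply: Lrange.
- by move=> th _; apply: (SC s x).2.
- by move=> th _; apply: (SC s' _).2.
- by rewrite (SC s' _).1.
Qed.

Lemma semigroup T t y : 0 <= T -> T <= t -> phi t y = phi (t - T) (phi T y).
Proof.
move=> T0 Tt.
apply: (@uniq_sol R n f Cf lm lp (fun=> lm) T t (fun th => phi th y) (fun th => phi (th - T) (phi T y))) => //.
- by move=> th _; rewrite lexx ltW.
- by move=> th _; exact: (AF y).2 th.
- by move=> th _; apply: (@shift_der R _ (fun u => phi u (phi T y)) T th); exact: (AF _).2 (th - T).
- by rewrite subrr (AF _).1.
Qed.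


Lemma cont_phi (T Rb : R) (x : 'rV[R]_n) : 0 <= T -> 0 <= Rb ->
  (forall th, 0 <= th <= T -> `|phi th x| <= Rb) ->
  forall mu, 0 < mu -> exists2 rho, 0 < rho & forall x', `|x' - x| < rho -> `|phi T x' - phi T x| < mu.
Proof.
move=> T0 Rb0 HB mu mu0.
have [M [M0 HM]] := f_lip Cf lm lp (addr_ge0 Rb0 ler01).
pose mu' := Order.min mu 1.
have m'0 : 0 < mu' by rewrite lt_min mu0 ltr01.
have m'1 : mu' <= 1 by rewrite ge_min lexx orbT.
have m'm : mu' <= mu by rewrite ge_min lexx.
pose C := mu' * expR (- ((M + 1) * (T - 0))).
have C0 : 0 < C by apply: mulr_gt0 => //; apply: expR_gt0.
have CE : C * expR ((M + 1) * (T - 0)) = mu'.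
  by rewrite /C -mulrA -expRD addNr expR0 mulr1.
exists C => // x' hx'.
have H := @gronwall R _ 0 T (fun th => phi th x') (fun th => phi th x)
  (fun th => f (phi th x', lm)) (fun th => f (phi th x, lm)) M (M + 1) C 0 1 T0
  (fun th _ => (AF x').2 th) (fun th _ => (AF x).2 th).
have := H _ M0 ltac:(lra) (lexx 0) ltac:(by rewrite addrAC subrr add0r mul1r)
  ltac:(by rewrite !(AF _).1) ltac:(by rewrite CE) T ltac:(by rewrite T0 lexx).
  rewrite CE => h; apply: lt_le_trans (h _) m'm.
move=> t ht h1; rewrite addr0.
have := HM (phi t x') (phi t x) lm lm.
rewrite subrr normr0 addr0; apply => //; last by rewrite lexx ltW.
  have := ler_normD (phi t x' - phi t x) (phi t x); rewrite subrK => h2.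
  have := HB t ht; lra.
  by apply: le_trans (HB t ht) _; rewrite lerDl.
by rewrite lexx ltW.
Qed.

Lemma approx (T Rb mu : R) : 0 <= T -> 0 <= Rb -> 0 < mu ->
  exists s0, forall s x, s <= s0 -> (forall th, 0 <= th <= T -> `|phi th x| <= Rb) ->
    `|Phi (s + T) s x - phi T x| < mu.
Proof.
move=> T0 Rb0 mu0.
have [M [M0 HM]] := f_lip Cf lm lp (addr_ge0 Rb0 ler01).
pose mu' := Order.min mu 1.
have m'0 : 0 < mu' by rewrite lt_min mu0 ltr01.
have m'1 : mu' <= 1 by rewrite ge_min lexx orbT.
have m'm : mu' <= mu by rewrite ge_min lexx.
pose C := mu' * expR (- ((M + 1) * T)).
have C0 : 0 < C by apply: mulr_gt0 => //; apply: expR_gt0.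
pose ka := C / (M + 1).
have ka0 : 0 < ka by apply: divr_gt0 => //; lra.
have Mka : M * ka < C.
  rewrite /ka mulrA ltr_pdivrMr; last lra.
  nra.
have [_ [_ [Lm _]]] := PS.
move: Lm => /cvgr_dist_lt /(_ ka ka0).
move=> [X [Xreal HX]].
exists (X / r - T - 1) => s x ss0 HB.
have H := @gronwall R _ s (s + T) (fun th => Phi th s x) (fun th => phi (th - s) x)
  (fun th => f (Phi th s x, L (r * th))) (fun th => f (phi (th - s) x, lm)) M (M + 1) C (M * ka) 1
  ltac:(lra) (fun th _ => (SC s x).2 th)
  (fun th _ => @shift_der R _ (fun u => phi u x) s th _ ((AF x).2 (th - s))).
have CE : C * expR ((M + 1) * (s + T - s)) = mu'.
  by rewrite addrAC subrr add0r /C -mulrA -expRD addNr expR0 mulr1.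
have := H _ M0 ltac:(lra) ltac:(by apply: mulr_ge0; lra) ltac:(by rewrite addrAC subrr add0r mul1r)
  ltac:(by rewrite subrr (SC s x).1 (AF x).1 subrr normr0) ltac:(by rewrite CE)
  (s + T) ltac:(apply/andP; split; lra).
  rewrite CE addrAC subrr add0r => h; apply: lt_le_trans (h _) m'm.
move=> t /andP[st stT] h1.
have hB : `|phi (t - s) x| <= Rb by apply: HB; apply/andP; split; lra.
have := HM (Phi t s x) (phi (t - s) x) (L (r * t)) lm.
have hB' : `|phi (t - s) x| <= Rb + 1 by apply: le_trans hB _; rewrite lerDl.
move=> /(_ _ hB' (Lrange _) ltac:(by rewrite lexx ltW)) h2.
apply: le_trans (h2 _) _.
  have := ler_normD (Phi t s x - phi (t - s) x) (phi (t - s) x); rewrite subrK => h3.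
  lra.
rewrite mulrDr lerD2l ler_wpM2l //.
have rt : r * t < X.
  have : r * t <= r * (X / r - 1).
    apply: ler_wpM2l; first exact: ltW r0.
    move: ss0; set Xr := X / r => ss0; lra.
  rewrite mulrBr mulr1 mulrCA mulfV ?gt_eqF // mulr1 => hh; apply: (le_lt_trans hh).
  by rewrite -subr_gt0 opprB addrC subrK.
have := HX (r * t) rt; rewrite distrC => hh; exact: ltW hh.
Qed.

End Main.

Section Main2.
Variables (R : realType) (n : nat)
  (f : 'rV[R]_n * R -> 'rV[R]_n) (lm lp : R) (L : R -> R) (r : R)
  (Phi : R -> R -> 'rV[R]_n -> 'rV[R]_n) (phi : R -> 'rV[R]_n -> 'rV[R]_n)
  (Am : set 'rV[R]_n).
Hypotheses (Cf : C1 f) (lmlp : lm < lp) (PS : parameter_shift lm lp L) (r0 : 0 < r)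
  (SC : solution_cocycle f L r Phi) (AF : autonomous_flow f lm phi)
  (AS : asymptotically_stable phi Am).

Lemma mxl (x y : R) : x <= Order.max x y. Proof. by rewrite le_max lexx. Qed.
Lemma mxr (x y : R) : y <= Order.max x y. Proof. by rewrite le_max lexx orbT. Qed.

Lemma unif_attr (Y : set 'rV[R]_n) (e de Rb : R) : compact Y -> 0 < de -> 0 <= Rb ->
  (forall t y, 0 < t -> nbhd_set de Am y -> nbhd_set e Am (phi t y)) ->
  (forall x, Y x -> forall th, 0 <= th -> `|phi th x| <= Rb) ->
  (forall x, Y x -> forall eps : R, 0 < eps -> \forall t \near +oo, nbhd_set eps Am (phi t x)) ->
  exists T, 0 < T /\ forall x, Y x -> nbhd_set e Am (phi T x).
Proof.
move=> cY de0 Rb0 hS hB hA.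
have nc := (compact_near_coveringP Y).1 cY.
have := nc R (nbhs +oo) (fun t x => nbhd_set e Am (phi t x)) _.
move=> /(_ _) H.
have [|M2 [M2r HM2]] := H.
  move=> x Yx.
  have [M [Mr HM]] := hA x Yx (de / 2) ltac:(by apply: divr_gt0).
  pose Tx := Order.max M 0 + 1.
  have MTx : M < Tx by rewrite /Tx; have := (mxl M 0); lra.
  have Tx0 : 0 < Tx by rewrite /Tx; have := (mxr M 0); lra.
  have hTx := HM Tx MTx.
  pose mu := de / 2 / (n%:R + 1).
  have mu0 : 0 < mu by rewrite /mu; apply: divr_gt0; [apply: divr_gt0 | apply: ltr_wpDl].
  have [rho rho0 Hrho] := @cont_phi R n f lm lp phi Cf lmlp AF Tx Rb x (ltW Tx0) Rb0
     (fun th hth => hB x Yx th ltac:(by case/andP: hth)) mu mu0.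
  exists (ball x rho, [set t : R | Tx < t]); first split.
  - exact: nbhsx_ballx.
  - by exists Tx; split; [exact: num_real | move=> t].
  move=> [x' t] [/= bx' tt].
  have hx' : `|x' - x| < rho by move: bx'; rewrite -ball_normE /ball_ /= distrC.
  have h1 := Hrho x' hx'.
  have [a Aa ha] := hTx.
  have hd : nbhd_set de Am (phi Tx x').
    exists a => //.
    have -> : phi Tx x' - a = (phi Tx x' - phi Tx x) + (phi Tx x - a) by rewrite addrA subrK.
    have -> : de = 2 * (de / 2) by rewrite mulrC -mulrA mulVf ?mulr1 // pnatr_eq0.
    apply: enorm_add2 => //.
    apply: le_lt_trans (enorm_le _) _.
    have : n%:R * `|phi Tx x' - phi Tx x| <= n%:R * mu by apply: ler_wpM2l => //; apply: ltW.
    move=> hh; apply: le_lt_trans hh _.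
    rewrite /mu; set q := de / 2; have q0 : 0 < q by apply: divr_gt0.
    have n0 : 0 <= (n%:R : R) by [].
    rewrite mulrA ltr_pdivrMr; last by apply: ltr_wpDl.
    nra.
  have -> : phi t x' = phi (t - Tx) (phi Tx x').
    by apply: (@semigroup R n f lm lp phi Cf lmlp AF); lra.
  by apply: hS => //; rewrite subr_gt0.
exists (Order.max M2 0 + 1); split; first by have := (mxr M2 0); lra.
move=> x Yx; apply: (HM2 (Order.max M2 0 + 1)) => //.
by have := (mxl M2 0); lra.
Qed.
End Main2.

Section Main3.
Variables (R : realType) (n : nat)
  (f : 'rV[R]_n * R -> 'rV[R]_n) (lm lp : R) (L : R -> R) (r : R)
  (Phi : R -> R -> 'rV[R]_n -> 'rV[R]_n) (phi : R -> 'rV[R]_n -> 'rV[R]_n)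
  (Am : set 'rV[R]_n).
Hypotheses (Cf : C1 f) (lmlp : lm < lp) (PS : parameter_shift lm lp L) (r0 : 0 < r)
  (SC : solution_cocycle f L r Phi) (AF : autonomous_flow f lm phi)
  (AS : asymptotically_stable phi Am).

Lemma nbhd_mono (e e' : R) : e <= e' -> nbhd_set e Am `<=` nbhd_set e' Am.
Proof. by move=> ee' x [a Aa h]; exists a => //; apply: lt_le_trans ee'. Qed.

Lemma pull_mono (e e' t : R) : e <= e' -> pullback_set Phi Am e t `<=` pullback_set Phi Am e' t.
Proof.
move=> ee' z Hz tau tau0; apply: (closureS _ (Hz tau tau0)).
move=> w [s hs [x hx <-]]; exists s => //; exists x => //; exact: nbhd_mono hx.
Qed.

Lemma Am_bound : exists Ra, 0 <= Ra /\ forall a, Am a -> `|a| <= Ra.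
Proof.
case: AS => cA _ _ _.
have [M [Mreal HM]] := compact_bounded cA.
exists (`|M| + 1); split; first by apply: addr_ge0.
move=> a Aa; apply: (HM (`|M| + 1)) => //.
by rewrite (le_lt_trans (real_ler_norm Mreal)) // ltrDl.
Qed.

Lemma box_of (Ra e : R) (z : 'rV[R]_n) : (forall a, Am a -> `|a| <= Ra) -> e <= 1 ->
  nbhd_set e Am z -> `|z| <= Ra + 1.
Proof.
move=> HRa e1 [a Aa h].
have h1 := norm_le_enorm (z - a).
have := ler_normD (z - a) a; rewrite subrK => h2.
have := HRa a Aa; lra.
Qed.

Lemma main_incl : exists2 eta0 : R, 0 < eta0 &
  forall eta eta' : R, 0 < eta -> eta <= eta' -> eta' <= eta0 ->
    forall t, pullback_set Phi Am eta' t `<=` pullback_set Phi Am eta t.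
Proof.
case: AS => cA _ stab [ea ea0 attr].
have [d1 d10 Hd1] := stab 1 ltr01.
have [Ra [Ra0 HRa]] := Am_bound.
pose m := Order.min d1 (Order.min ea 1).
have m0 : 0 < m by rewrite /m !lt_min d10 ea0 ltr01.
have m1 : m <= d1 by rewrite /m ge_min lexx.
have m2 : m <= ea by rewrite /m !ge_min lexx orbT.
have m3 : m <= 1 by rewrite /m !ge_min lexx !orbT.
exists (m / 4); first by apply: divr_gt0.
move=> eta eta' eta0 ee' e'm t.
have e'0 : 0 < eta' by lra.
have hB : forall x, nbhd_set (2 * eta') Am x -> forall th, 0 <= th -> `|phi th x| <= Ra + 1.
  move=> x hx th; rewrite le_eqVlt => /orP[/eqP <-|th0].
    by rewrite (AF x).1; apply: box_of hx => //; lra.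
  apply: (@box_of Ra 1) => //; apply: Hd1 => //; apply: nbhd_mono hx; lra.
pose Y := closure (nbhd_set eta' Am).
have YN : Y `<=` nbhd_set (2 * eta') Am.
  move=> z Yz.
  pose rho := eta' / (n%:R + 1).
  have rho0 : 0 < rho by apply: divr_gt0 => //; apply: ltr_wpDl.
  have [x [[a Aa ha] bx]] := Yz _ (nbhsx_ballx z rho rho0).
  exists a => //.
  have -> : z - a = (z - x) + (x - a) by rewrite addrA subrK.
  apply: enorm_add2 => //.
  apply: le_lt_trans (enorm_le _) _.
  have hzx : `|z - x| < rho by move: bx; rewrite -ball_normE /ball_ /=.
  have n0 : 0 <= (n%:R : R) by [].
  have : n%:R * `|z - x| <= n%:R * rho by apply: ler_wpM2l => //; apply: ltW.
  move=> hh; apply: le_lt_trans hh _.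
  rewrite /rho mulrA ltr_pdivrMr; last by apply: ltr_wpDl.
  nra.
have cY : compact Y.
  apply: bounded_closed_compact; last exact: closed_closure.
  exists (Ra + 1); split; first exact: num_real.
  move=> M HM z Yz; apply: le_trans (ltW HM).
  apply: (@box_of Ra (2 * eta')) => //; [lra | exact: YN].
have eta20 : 0 < eta / 2 by apply: divr_gt0.
have [d2 d20 Hd2] := stab (eta / 2) eta20.
have [T [T0 HT]] := @unif_attr R n f lm lp phi Am Cf lmlp AF Y (eta / 2) d2 (Ra + 1) cY d20
  (addr_ge0 Ra0 ler01) Hd2 (fun x Yx => hB x (YN x Yx))
  (fun x Yx => attr x ltac:(by apply: nbhd_mono (YN x Yx); lra)).
pose mu := eta / 2 / (n%:R + 1).
have mu0 : 0 < mu by apply: divr_gt0 => //; apply: ltr_wpDl.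
have [s0 Hs0] := @approx R n f lm lp L r Phi phi Cf lmlp PS r0 SC AF T (Ra + 1) mu (ltW T0)
  (addr_ge0 Ra0 ler01) mu0.
have MC : forall s x, s <= s0 -> nbhd_set eta' Am x -> nbhd_set eta Am (Phi (s + T) s x).
  move=> s x ss0 hx.
  have Yx : Y x by apply: subset_closure.
  have [a Aa ha] := HT x Yx.
  have h1 := Hs0 s x ss0 (fun th hth => hB x (YN x Yx) th ltac:(by case/andP: hth)).
  exists a => //.
  have -> : Phi (s + T) s x - a = (Phi (s + T) s x - phi T x) + (phi T x - a) by rewrite addrA subrK.
  have -> : eta = 2 * (eta / 2) by rewrite mulrC -mulrA mulVf ?mulr1 // pnatr_eq0.
  apply: enorm_add2 => //.
  apply: le_lt_trans (enorm_le _) _.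
  have n0 : 0 <= (n%:R : R) by [].
  have : n%:R * `|Phi (s + T) s x - phi T x| <= n%:R * mu by apply: ler_wpM2l => //; apply: ltW.
  move=> hh; apply: le_lt_trans hh _.
  rewrite /mu; set q := eta / 2.
  rewrite mulrA ltr_pdivrMr; last by apply: ltr_wpDl.
  have q0 : 0 < q := eta20.
  nra.
move=> z Hz tau /= tau0.
pose tau2 := Order.max (tau + T) (Order.max (- s0) (T - t)) + 1.
have t1 : tau + T <= Order.max (tau + T) (Order.max (- s0) (T - t)) by rewrite le_max lexx.
have t2 : - s0 <= Order.max (tau + T) (Order.max (- s0) (T - t)) by rewrite !le_max lexx !orbT.
have t3 : T - t <= Order.max (tau + T) (Order.max (- s0) (T - t)) by rewrite !le_max lexx !orbT.
have tau20 : 0 < tau2 by rewrite /tau2; lra.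
apply: (closureS _ (Hz tau2 tau20)).
move=> w [s hs [x hx <-]].
have hs' : s <= - tau2 by exact: hs.
exists (s + T); first by rewrite /= ; rewrite /tau2 in hs'; lra.
exists (Phi (s + T) s x); first by apply: MC => //; rewrite /tau2 in hs'; lra.
rewrite -(@cocycle R n f lm lp L r Phi Cf PS SC s (s + T) t x) //; first by lra.
rewrite /tau2 in hs'; lra.
Qed.

End Main3.

Unset Implicit Arguments.
Set Strict Implicit.
Theorem lemma2p4 (R : realType) (n : nat)
  (f : 'rV[R]_n * R -> 'rV[R]_n) (lm lp : R) (L : R -> R) (r : R)
  (Phi : R -> R -> 'rV[R]_n -> 'rV[R]_n) (phi : R -> 'rV[R]_n -> 'rV[R]_n)
  (Am : set 'rV[R]_n) :
  C1 f -> lm < lp -> parameter_shift lm lp L -> 0 < r ->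
  solution_cocycle f L r Phi -> autonomous_flow f lm phi ->
  asymptotically_stable phi Am ->
  exists2 eta0 : R, 0 < eta0 &
    forall eta eta' : R, 0 < eta <= eta0 -> 0 < eta' <= eta0 ->
      forall t : R, pullback_set Phi Am eta t = pullback_set Phi Am eta' t.
Proof.
move=> Cf lmlp PS r0 SC AF AS.
have [eta0 e0 H] := @main_incl R n f lm lp L r Phi phi Am Cf lmlp PS r0 SC AF AS.
exists eta0 => // eta eta' /andP[h1 h2] /andP[h3 h4] t.
apply/seteqP; split.
- have [le|lt] := leP eta eta'.
    exact: pull_mono.
  by apply: H => //; apply: ltW.
- have [le|lt] := leP eta eta'.
    exact: H.
  by apply: pull_mono; apply: ltW.
Qed.
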